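(* Fix a finite set $\Phi$ of $g$ groups and probabilities $p_{jk}\in[0,1]$ for $j,k\in\Phi$. For each $m$, let $V$ be a set of $m$ vertices, each assigned to a group by an arbitrary map $\varphi:V\to\Phi$, and let $\mathcal D$ be the random directed graph on $V$ in which each arc $(u,v)$, $u\ne v$, is present independently with probability $p_{\varphi(u)\varphi(v)}$. Let $\mathcal G$ be the undirected mutual-compatibility graph of $\mathcal D$ ($u,v$ adjacent iff both $(u,v)$ and $(v,u)$ are arcs). Then there is a constant $D>0$ depending only on $g$ and the $p_{jk}$ (not on $m$ or $\varphi$) such that $\mathbb E[\nu(\mathcal G)]\le D\log m$ for all $m\ge 2$, and $\Pr\big(\nu(\mathcal G)\le D\log m\big)\to 1$ as $m\to\infty$.
   Context: A set of odd cycles $\{c_1,\dots,c_l\}$ of an undirected graph is independent if the cycles are pairwise vertex-disjoint and no edge joins a vertex of $c_i$ to a vertex of $c_j$ for $i\ne j$; $\nu(\mathcal G)$ is the maximum size of an independent set of odd cycles of $\mathcal G$. *)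

(* Defs.v *)
From HB Require Import structures.
From mathcomp Require Import all_boot all_order all_algebra.
From mathcomp Require Import all_classical all_reals exp.
Set Implicit Arguments. Unset Strict Implicit. Unset Printing Implicit Defensive.
Import Order.TTheory GRing.Theory Num.Theory.
Local Open Scope ring_scope.

Definition odd_cycle_set (V : finType) (adj : rel V) (C : {set V}) : Prop :=
  exists s : seq V, [/\ uniq s, (3 <= size s)%N, odd (size s),
                        path.cycle adj s & C = [set x in s]].

(** An independent set of odd cycles (represented by their vertex sets; since
    the cycles are pairwise vertex-disjoint, distinct cycles have distinct
    vertex sets, and independence only depends on the vertex sets). *)
Definition indep_odd_cycles (V : finType) (adj : rel V) (F : {set {set V}}) : Prop :=
  (forall C, C \in F -> odd_cycle_set adj C) /\
  (forall C1 C2, C1 \in F -> C2 \in F -> C1 != C2 ->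
     [disjoint C1 & C2] /\ (forall u v, u \in C1 -> v \in C2 -> ~~ adj u v)).

Definition nu (V : finType) (adj : rel V) : nat :=
  \max_(F : {set {set V}} | `[< indep_odd_cycles adj F >]) #|F|.

Definition digraph (m : nat) := {ffun 'I_m * 'I_m -> bool}.

(** Probability weight of the digraph [A] in the model where each arc (u,v),
    u <> v, is present independently with probability p (phi u) (phi v);
    loops are never present. *)
Definition dg_weight (R : realType) (g m : nat) (p : 'I_g -> 'I_g -> R)
    (phi : 'I_m -> 'I_g) (A : digraph m) : R :=
  \prod_(uv : 'I_m * 'I_m)
     (if uv.1 == uv.2 then (~~ A uv)%:R
      else if A uv then p (phi uv.1) (phi uv.2) else 1 - p (phi uv.1) (phi uv.2)).

Definition mutual (m : nat) (A : digraph m) : rel 'I_m :=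
  fun u v => [&& u != v, A (u, v) & A (v, u)].

Definition dg_expect (R : realType) (g m : nat) (p : 'I_g -> 'I_g -> R)
    (phi : 'I_m -> 'I_g) (X : digraph m -> R) : R :=
  \sum_(A : digraph m) dg_weight p phi A * X A.

Definition dg_prob (R : realType) (g m : nat) (p : 'I_g -> 'I_g -> R)
    (phi : 'I_m -> 'I_g) (E : pred (digraph m)) : R :=
  \sum_(A : digraph m | E A) dg_weight p phi A.

(* Main.v *)
Require Import Defs.
From HB Require Import structures.
From mathcomp Require Import all_boot all_order all_algebra.
From mathcomp Require Import all_classical all_reals exp.
From mathcomp Require Import ring lra.
Import Order.TTheory GRing.Theory Num.Theory.


Lemma odd_cycle_ne (V : finType) (adj : rel V) C :
  odd_cycle_set adj C -> exists x y, [/\ x \in C, y \in C & adj x y].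
Proof.
move=> [s [_ hs _ hc ->]].
case: s hs hc => // x [//|y s] _ /= /andP [hxy _].
by exists x, y; rewrite !inE !eqxx ?orbT.
Qed.

Lemma nu_le_card (V : finType) (adj : rel V) : (nu adj <= #|V|)%N.
Proof.
apply/bigmax_leqP => F /asboolP [Hc Hd].
have ne C : C \in F -> exists x, x \in C.
  by move=> /Hc /odd_cycle_ne [x [y [hx _ _]]]; exists x.
case: (pickP (@predT V)) => [x0 _ | h0]; last first.
  rewrite (eq_card0 (A := F)) // => C; apply/negP => /ne [x _].
  by move: (h0 x).
pose f C := odflt x0 [pick x in (C : {set V})].
have fC C : C \in F -> f C \in C.
  move=> /ne [x hx]; rewrite /f; case: pickP => [y hy //|h].
  by move: (h x); rewrite hx.
rewrite -(card_in_imset (f := f)); first exact: max_card.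
move=> C1 C2 h1 h2 he; apply/eqP; apply/negPn/negP => hne.
have [hd _] := Hd C1 C2 h1 h2 hne.
by move: (disjointFr hd (fC _ h1)); rewrite he (fC _ h2).
Qed.

Lemma nu_ge (V : finType) (adj : rel V) N : (N <= nu adj)%N ->
  exists F, indep_odd_cycles adj F /\ (N <= #|F|)%N.
Proof.
case: N => [_|N h].
  by exists finset.set0; split => //; split => [C|C1 C2]; rewrite inE.
case: (boolP [exists F : {set {set V}}, `[< indep_odd_cycles adj F >] && (N < #|F|)%N]).
  move=> /existsP [F /andP [hF hN]]; exists F; split => //; exact/asboolP.
move=> /existsPn H.
have : (nu adj <= N)%N.
  apply/bigmax_leqP => F hF.
  by move: (H F); rewrite hF /= -leqNgt.
by move=> /(leq_trans h); rewrite ltnn.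
Qed.

Definition validb m g (phi : 'I_m -> 'I_g) a b k (u v : {ffun 'I_k -> 'I_m}) :=
  [&& injectiveb u, injectiveb v, [forall i, forall j, u i != v j],
      [forall i, phi (u i) == a] & [forall i, phi (v i) == b]].

Definition cfgb m k (A : digraph m) (u v : 'I_k -> 'I_m) :=
  [forall i, forall j, (i == j) == (A (u i, v j) && A (v j, u i))].

Arguments validb {m g} phi a b {k}.
Arguments cfgb {m k}.

Lemma extract m g (phi : 'I_m -> 'I_g) (A : digraph m) k (x0 : 'I_m) F :
  indep_odd_cycles (mutual A) F -> (g * g * k.-1 < #|F|)%N ->
  exists a b (u v : {ffun 'I_k -> 'I_m}), validb phi a b u v && cfgb A u v.
Proof.
move=> [Hc Hd] hF.
pose ed (C : {set 'I_m}) := odflt (x0, x0)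
  [pick xy : 'I_m * 'I_m | [&& xy.1 \in C, xy.2 \in C & mutual A xy.1 xy.2]].
have edP C : C \in F -> [&& (ed C).1 \in C, (ed C).2 \in C & mutual A (ed C).1 (ed C).2].
  move=> /Hc /odd_cycle_ne [x [y [hx hy hxy]]].
  rewrite /ed; case: pickP => [xy -> //|h].
  by move: (h (x, y)); rewrite /= hx hy hxy.
pose typ C := (phi (ed C).1, phi (ed C).2).
have [t hk] : exists t, (k <= #|[set C in F | typ C == t]|)%N.
  case: (boolP [exists t, (k <= #|[set C in F | typ C == t]|)%N]).
    by move=> /existsP [t ht]; exists t.
  move=> /existsPn H; exfalso; move: hF; apply/negP; rewrite -leqNgt.
  rewrite -sum1_card (partition_big typ xpredT) //=.
  apply: (leq_trans (n := \sum_(t : 'I_g * 'I_g) k.-1)).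
    apply: leq_sum => t _.
    have := H t; rewrite -ltnNge => ht.
    rewrite (eq_bigl (fun C => C \in [set C in F | typ C == t])); last first.
      by move=> C; rewrite inE.
    by rewrite sum1_card -ltnS; case: k ht {H} => //= k ht; apply: leq_trans ht _.
  by rewrite sum_nat_const card_prod !card_ord.
pose Ft := [set C in F | typ C == t].
pose Ci (i : 'I_k) : {set 'I_m} := enum_val (A := Ft) (widen_ord hk i).
have CiF i : (Ci i \in F) && (typ (Ci i) == t).
  by have := enum_valP (A := Ft) (widen_ord hk i); rewrite inE.
have Ci_inj : injective Ci.
  move=> i j /enum_val_inj /(congr1 val) /= h; exact: val_inj.
have cross i j : i != j -> [disjoint Ci i & Ci j] /\
    (forall x y, x \in Ci i -> y \in Ci j -> ~~ mutual A x y).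
  move=> ne; have /andP [hi _] := CiF i; have /andP [hj _] := CiF j.
  apply: Hd => //; apply: contra ne => /eqP /Ci_inj ->; exact: eqxx.
pose u := [ffun i => (ed (Ci i)).1].
pose v := [ffun i => (ed (Ci i)).2].
have eP i := edP _ (proj1 (andP (CiF i))).
have uv i j : u i != v j.
  rewrite !ffunE; case: (eqVneq i j) => [->|ne].
    by have /and3P [_ _ /andP []] := eP j.
  have [hd _] := cross i j ne.
  have /and3P [hi _ _] := eP i; have /and3P [_ hj _] := eP j.
  by apply/negP => /eqP he; move: (disjointFr hd hi); rewrite he hj.
exists t.1, t.2, u, v; apply/andP; split.
  apply/and5P; split.
  - apply/injectiveP => i j; rewrite !ffunE => he; apply/eqP/negPn/negP => ne.
    have [hd _] := cross i j ne.
    have /and3P [hi _ _] := eP i; have /and3P [hj _ _] := eP j.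
    by move: (disjointFr hd hi); rewrite he hj.
  - apply/injectiveP => i j; rewrite !ffunE => he; apply/eqP/negPn/negP => ne.
    have [hd _] := cross i j ne.
    have /and3P [_ hi _] := eP i; have /and3P [_ hj _] := eP j.
    by move: (disjointFr hd hi); rewrite he hj.
  - by apply/forallP => i; apply/forallP => j; apply: uv.
  - by apply/forallP => i; have /andP [_ /eqP <-] := CiF i; rewrite ffunE.
  - by apply/forallP => i; have /andP [_ /eqP <-] := CiF i; rewrite ffunE.
apply/forallP => i; apply/forallP => j.
case: (eqVneq i j) => [->|ne].
  have /and3P [_ _ hm] := eP j.
  by move: hm; rewrite /mutual !ffunE => /and3P [_ -> ->].
have [_ hn] := cross i j ne.
have /and3P [hi _ _] := eP i; have /and3P [_ hj _] := eP j.
have := hn _ _ hi hj; have := uv i j.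
by rewrite /mutual !ffunE /= => -> /=.
Qed.

Local Open Scope ring_scope.
Section Prob.
Variable R : realType.
Variable T : finType.
Variable w : T -> bool -> R.

Definition EW (X : {ffun T -> bool} -> R) :=
  \sum_(A : {ffun T -> bool}) (\prod_e w e (A e)) * X A.

Lemma FL (f : T -> bool -> R) :
  EW (fun A => \prod_e f e (A e)) = \prod_e (\sum_b w e b * f e b).
Proof.
rewrite bigA_distr_bigA /EW; apply: eq_bigr => A _.
by rewrite -big_split.
Qed.

Lemma EW_ext (X Y : {ffun T -> bool} -> R) : (forall A, X A = Y A) -> EW X = EW Y.
Proof. by move=> h; rewrite /EW; apply: eq_bigr => A _; rewrite h. Qed.

Hypothesis w1 : forall e, w e true + w e false = 1.

Lemma Emono (U : {set T}) :
  EW (fun A => \prod_(e in U) (A e)%:R) = \prod_(e in U) w e true.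
Proof.
have HF := FL (fun e b => if e \in U then (b%:R : R) else 1).
have -> : \prod_(e in U) w e true =
   \prod_e \sum_b w e b * (if e \in U then (b%:R : R) else 1).
  rewrite big_mkcond; apply: eq_bigr => e _.
  rewrite big_bool /=; case: ifP => _; first by rewrite mulr1 mulr0 addr0.
  by rewrite !mulr1 w1.
rewrite -HF; congr EW; apply: funext => A; by rewrite big_mkcond.
Qed.

Lemma regroup (S : finType) (x y : S -> T) (J : {set S}) (G : T -> R) :
  injective x -> injective y -> (forall s s', x s != y s') ->
  \prod_(e in x @: J :|: y @: J) G e = \prod_(s in J) (G (x s) * G (y s)).
Proof.
move=> ix iy dxy.
rewrite (eq_bigl [predU x @: J & y @: J]); last by move=> e; rewrite !inE.
rewrite bigU; last first.
  apply/pred0P => e /=; apply/negP => /andP [/imsetP [s _ ->] /imsetP [s' _]].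
  by apply/eqP; rewrite dxy.
rewrite big_split /= !big_imset //.
  by move=> ? ? _ _; apply: iy.
by move=> ? ? _ _; apply: ix.
Qed.

Lemma EWlin (S : finType) (X : S -> {ffun T -> bool} -> R) :
  EW (fun A => \sum_s X s A) = \sum_s EW (X s).
Proof.
rewrite /EW exchange_big /=; apply: eq_bigr => A _; by rewrite mulr_sumr.
Qed.

Lemma EWscale (c : R) (X : {ffun T -> bool} -> R) :
  EW (fun A => c * X A) = c * EW X.
Proof.
rewrite /EW mulr_sumr; apply: eq_bigr => A _; by rewrite mulrCA.
Qed.

Lemma PairExp (S : finType) (x y : S -> T) (al be : S -> R) :
  injective x -> injective y -> (forall s s', x s != y s') ->
  EW (fun A => \prod_s (al s + be s * (A (x s))%:R * (A (y s))%:R)) =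
  \prod_s (al s + be s * w (x s) true * w (y s) true).
Proof.
move=> ix iy dxy.
have ex2 (F : S -> R) : \prod_s (al s + be s * F s) =
    \sum_(J : {ffun S -> bool}) \prod_s (if J s then be s * F s else al s).
  rewrite -(bigA_distr_bigA (fun s (b : bool) => if b then be s * F s else al s)).
  apply: eq_bigr => s _.
  by rewrite big_bool /= addrC.
have sp (J : {ffun S -> bool}) (F : S -> R) :
   \prod_s (if J s then be s * F s else al s) =
   (\prod_s (if J s then be s else al s)) * \prod_(s in [set s | J s]) F s.
  rewrite [X in _ * X]big_mkcond -big_split; apply: eq_bigr => s _ /=.
  by rewrite inE; case: (J s); rewrite ?mulr1.
rewrite (EW_ext _ (fun A => \sum_(J : {ffun S -> bool})
     (\prod_s (if J s then be s else al s)) *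
     \prod_(s in [set s | J s]) ((A (x s))%:R * (A (y s))%:R))); last first.
  move=> A; rewrite (eq_bigr (fun s => al s + be s * ((A (x s))%:R * (A (y s))%:R)));
    last by move=> s _; rewrite mulrA.
  by rewrite ex2; apply: eq_bigr => J _; rewrite sp.
rewrite EWlin.
rewrite (eq_bigr (fun s => al s + be s * (w (x s) true * w (y s) true)));
  last by move=> s _; rewrite mulrA.
rewrite ex2; apply: eq_bigr => J _.
rewrite EWscale sp; congr (_ * _).
rewrite (EW_ext _ (fun A => \prod_(e in x @: [set s | J s] :|: y @: [set s | J s]) (A e)%:R)).
  by rewrite Emono regroup.
by move=> A; rewrite regroup.
Qed.

End Prob.
Arguments EW {R T}.
Arguments EW_ext {R T w}.
Arguments PairExp {R T w}.
Arguments FL {R T}.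

Section B.
Variable R : realType.

Definition rdef (q : R) : R := if (0 < q) && (q < 1) then 1 - q else 2^-1.

Lemma rdef_gt0 q : 0 < rdef q.
Proof. rewrite /rdef; case: ifP => [/andP [_ h]|_]; by rewrite ?subr_gt0 ?invr_gt0. Qed.

Lemma rdef_lt1 q : rdef q < 1.
Proof.
rewrite /rdef; case: ifP => [/andP [h _]|_]; first by rewrite ltrBlDr ltrDl.
by rewrite invf_lt1 // ltr1n.
Qed.

Lemma prod_bound (k : nat) (q : R) : (2 <= k)%N -> 0 <= q <= 1 ->
  \prod_(s : 'I_k * 'I_k) (if s.1 == s.2 then q else 1 - q) <= rdef q ^+ (k * k.-1).
Proof.
case: k => [//|[//|k]] _ /andP [q0 q1].
have r0 := ltW (rdef_gt0 q).
have [->|qn0] := eqVneq q 0.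
  by rewrite (bigD1 (ord0, ord0)) //= mul0r exprn_ge0 // ltW // rdef_gt0.
have [->|qn1] := eqVneq q 1.
  by rewrite (bigD1 (ord0, ord_max)) //= subrr mul0r exprn_ge0 // ltW // rdef_gt0.
have qq : (0 < q) && (q < 1) by rewrite !lt_def qn0 q0 eq_sym qn1 q1.
apply: (le_trans (y := \prod_(s : 'I_k.+2 * 'I_k.+2) (if s.1 == s.2 then 1 else rdef q))).
  apply: ler_prod => s _; case: ifP => _; rewrite ?q0 ?q1 //.
  by rewrite /rdef qq subr_ge0 q1 lexx.
rewrite -(pair_bigA _ (fun i j => if i == j then 1 else rdef q)) /=.
rewrite (eq_bigr (fun _ => rdef q ^+ k.+1)); last first.
  move=> i _; rewrite (bigD1 i) //= eqxx mul1r.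
  rewrite (eq_bigr (fun _ => rdef q)); last by move=> j /negbTE; rewrite eq_sym => ->.
  by rewrite prodr_const cardC1 card_ord.
by rewrite prodr_const card_ord -exprM mulnC.
Qed.

End B.
Arguments rdef {R}.
Arguments rdef_gt0 {R}.
Arguments rdef_lt1 {R}.
Arguments prod_bound {R}.


Section C.
Variable R : realType.
Variables (g : nat) (p : 'I_g -> 'I_g -> R).
Hypothesis p01 : forall j k, 0 <= p j k <= 1.

Definition wdg m (phi : 'I_m -> 'I_g) (e : 'I_m * 'I_m) (b : bool) : R :=
  if e.1 == e.2 then (~~ b)%:R
  else if b then p (phi e.1) (phi e.2) else 1 - p (phi e.1) (phi e.2).

Arguments wdg {m}.

Lemma wdg1 m (phi : 'I_m -> 'I_g) e : wdg phi e true + wdg phi e false = 1.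
Proof. rewrite /wdg; case: ifP => _ /=; first by rewrite add0r. by rewrite addrC subrK. Qed.

Lemma wdg_ge0 m (phi : 'I_m -> 'I_g) e b : 0 <= wdg phi e b.
Proof.
rewrite /wdg; case: ifP => _; first by case: b.
by case: b; have /andP [h1 h2] := p01 (phi e.1) (phi e.2); rewrite ?subr_ge0.
Qed.

Lemma dg_expectE m (phi : 'I_m -> 'I_g) X : dg_expect p phi X = EW (wdg phi) X.
Proof. by []. Qed.

Definition hcf m k (A : digraph m) (u v : 'I_k -> 'I_m) : R :=
  \prod_(s : 'I_k * 'I_k) ((s.1 == s.2) == (A (u s.1, v s.2) && A (v s.2, u s.1)))%:R.

Arguments hcf {m k}.

Lemma hcf_ge0 m k (A : digraph m) (u v : 'I_k -> 'I_m) : 0 <= hcf A u v.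
Proof. apply: prodr_ge0 => s _; exact: ler0n. Qed.

Lemma Ehcf m k (phi : 'I_m -> 'I_g) (u v : 'I_k -> 'I_m) a b :
  (2 <= k)%N -> injective u -> injective v -> (forall i j, u i != v j) ->
  (forall i, phi (u i) = a) -> (forall i, phi (v i) = b) ->
  dg_expect p phi (fun A => hcf A u v) <= rdef (p a b * p b a) ^+ (k * k.-1).
Proof.
move=> k2 iu iv duv pu pv.
rewrite dg_expectE.
set x := fun s : 'I_k * 'I_k => (u s.1, v s.2).
set y := fun s : 'I_k * 'I_k => (v s.2, u s.1).
have ix : injective x.
  by move=> [i j] [i' j'] [/iu -> /iv ->].
have iy : injective y.
  by move=> [i j] [i' j'] [/iv -> /iu ->].
have dxy s s' : x s != y s'.
  by apply/negP => /eqP [h _]; move: (duv s.1 s'.2); rewrite h eqxx.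
rewrite (EW_ext _ (fun A => \prod_s ((s.1 != s.2)%:R + (if s.1 == s.2 then 1 else -1)
     * (A (x s))%:R * (A (y s))%:R))); last first.
  move=> A; rewrite /hcf; apply: eq_bigr => s _ /=.
  by case: (s.1 == s.2); case: (A _); case: (A _); rewrite /= ?mulr0 ?mul0r ?mulr1 ?addr0 ?add0r ?subrr.
rewrite PairExp //; last exact: wdg1.
have -> : \prod_s ((s.1 != s.2)%:R + (if s.1 == s.2 then 1 else -1) *
     wdg phi (x s) true * wdg phi (y s) true) =
     \prod_(s : 'I_k * 'I_k) (if s.1 == s.2 then p a b * p b a else 1 - p a b * p b a).
  apply: eq_bigr => s _; rewrite /wdg /x /y /=.
  rewrite !pu !pv.
  case: (s.1 == s.2) => /=.
    rewrite ifN; last exact: duv.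
    rewrite ifN; last by rewrite eq_sym; exact: duv.
    by rewrite add0r mul1r.
  rewrite ifN; last exact: duv.
  rewrite ifN; last by rewrite eq_sym; exact: duv.
  by rewrite mulN1r mulNr.
apply: prod_bound => //.
have /andP [h1 h2] := p01 a b; have /andP [h3 h4] := p01 b a.
by rewrite mulr_ge0 //= mulr_ile1.
Qed.

End C.
Arguments wdg {R g} p {m}.
Arguments wdg1 {R g} p {m}.
Arguments wdg_ge0 {R g p} p01 {m}.
Arguments hcf {R m k}.
Arguments hcf_ge0 {R m k}.
Arguments Ehcf {R g p} p01 {m k}.


Lemma le_sum_term (R : realType) (I : finType) (F : I -> R) i0 :
  (forall i, 0 <= F i) -> F i0 <= \sum_i F i.
Proof. by move=> h; rewrite (bigD1 i0) //= lerDl sumr_ge0. Qed.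

Section Main.
Variable R : realType.
Variables (g : nat) (p : 'I_g -> 'I_g -> R).
Hypothesis p01 : forall j k, 0 <= p j k <= 1.

Lemma EW1 m (phi : 'I_m -> 'I_g) : EW (wdg p phi) (fun _ => 1) = 1.
Proof.
have := FL (wdg p phi) (fun _ _ => 1); rewrite /= => h.
rewrite (EW_ext _ (fun A => \prod_(e : 'I_m * 'I_m) 1)); last by move=> A; rewrite big1.
rewrite h big1 // => e _; rewrite big_bool /= !mulr1; exact: wdg1.
Qed.

Lemma EW_ge0 m (phi : 'I_m -> 'I_g) X : (forall A, 0 <= X A) -> 0 <= EW (wdg p phi) X.
Proof.
move=> h; apply: sumr_ge0 => A _; apply: mulr_ge0 => //.
apply: prodr_ge0 => e _; exact: (wdg_ge0 p01).
Qed.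

Lemma EW_le m (phi : 'I_m -> 'I_g) X Y : (forall A, X A <= Y A) ->
  EW (wdg p phi) X <= EW (wdg p phi) Y.
Proof.
move=> h; apply: ler_sum => A _; apply: ler_wpM2l => //.
apply: prodr_ge0 => e _; exact: (wdg_ge0 p01).
Qed.

Lemma probE m (phi : 'I_m -> 'I_g) (E : pred (digraph m)) :
  dg_prob p phi E = EW (wdg p phi) (fun A => (E A)%:R).
Proof.
rewrite /dg_prob /EW big_mkcond; apply: eq_bigr => A _.
by case: (E A); rewrite ?mulr1 ?mulr0.
Qed.

Lemma cfg_hcf m k (A : digraph m) (u v : 'I_k -> 'I_m) : cfgb A u v -> hcf (R:=R) A u v = 1.
Proof.
move=> /forallP h; rewrite /hcf big1 // => [[i j]] _ /=.
by have /forallP/(_ j) -> := h i.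
Qed.

Definition Ssum m k (phi : 'I_m -> 'I_g) (A : digraph m) : R :=
  \sum_(z : ('I_g * 'I_g) * ({ffun 'I_k -> 'I_m} * {ffun 'I_k -> 'I_m}))
     (validb phi z.1.1 z.1.2 z.2.1 z.2.2)%:R * hcf (R:=R) A z.2.1 z.2.2.

Arguments Ssum {m} k.

Lemma Ssum_ge0 m k (phi : 'I_m -> 'I_g) A : 0 <= Ssum k phi A.
Proof. apply: sumr_ge0 => z _; apply: mulr_ge0 => //; exact: hcf_ge0. Qed.

Lemma S_ge1 m k (phi : 'I_m -> 'I_g) (A : digraph m) (x0 : 'I_m) :
  (g * g * k.-1 < nu (mutual A))%N -> 1 <= Ssum k phi A.
Proof.
move=> /nu_ge [F [hF hN]].
have [a [b [u [v /andP [hv hc]]]]] := @extract _ _ phi A k x0 F hF hN.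
rewrite /Ssum; apply: (le_trans _ (@le_sum_term R _ _ ((a, b), (u, v)) _)).
  by rewrite /= hv cfg_hcf // mulr1.
move=> z; apply: mulr_ge0 => //; exact: hcf_ge0.
Qed.

Lemma ES_bound m k (phi : 'I_m -> 'I_g) : (2 <= k)%N ->
  (forall t : 'I_g * 'I_g, rdef (p t.1 t.2 * p t.2 t.1) ^+ k.-1 <= (m%:R^-1) ^+ 3) ->
  EW (wdg p phi) (Ssum k phi) <=
     (g * g * (m ^ k * m ^ k))%:R * (m%:R^-1) ^+ (3 * k).
Proof.
move=> k2 ht.
have c0 : 0 <= (m%:R^-1 : R) ^+ (3 * k) by rewrite exprn_ge0 // invr_ge0.
rewrite /Ssum EWlin.
apply: (@le_trans _ _ (\sum_(z : ('I_g * 'I_g) * ({ffun 'I_k -> 'I_m} * {ffun 'I_k -> 'I_m}))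
   (m%:R^-1 : R) ^+ (3 * k))); last first.
  have cf : #|{ffun 'I_k -> 'I_m}| = (m ^ k)%N by rewrite card_ffun !card_ord.
  by rewrite sumr_const !card_prod cf !card_ord mulr_natl.
apply: ler_sum => [[[a b] [u v]]] _ /=.
rewrite EWscale; case: (boolP (validb phi a b u v)) => hv; last by rewrite mul0r.
rewrite mul1r.
move: hv => /and5P [/injectiveP iu /injectiveP iv /forallP duv /forallP pu /forallP pv].
apply: le_trans (Ehcf p01 phi u v a b k2 iu iv _ _ _) _.
- by move=> i j; have /forallP := duv i; apply.
- by move=> i; apply/eqP.
- by move=> i; apply/eqP.
rewrite (mulnC k) exprM (exprM _ 3 k).
apply: lerXn2r; last exact: (ht (a, b)).
- by rewrite nnegrE exprn_ge0 // ltW // rdef_gt0.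
- by rewrite nnegrE exprn_ge0 // invr_ge0.
Qed.

Lemma EW_affine m (phi : 'I_m -> 'I_g) (c d : R) X :
  EW (wdg p phi) (fun A => c + d * X A) = c + d * EW (wdg p phi) X.
Proof.
have h1 := @EW1 m phi.
rewrite /EW (eq_bigr (fun A : {ffun _ -> bool} => ((\prod_e wdg p phi e (A e)) * 1) * c +
   d * ((\prod_e wdg p phi e (A e)) * X A))); last first.
  by move=> A _; rewrite mulr1 mulrDr mulrCA.
by rewrite big_split /= -mulr_suml -mulr_sumr -/(EW (wdg p phi) (fun=> 1)) h1 mul1r.
Qed.

Lemma prob_bound m k (phi : 'I_m -> 'I_g) (x0 : 'I_m) : (2 <= k)%N ->
  (forall t : 'I_g * 'I_g, rdef (p t.1 t.2 * p t.2 t.1) ^+ k.-1 <= (m%:R^-1) ^+ 3) ->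
  dg_prob p phi (fun A => (g * g * k.-1 < nu (mutual A))%N) <= (g * g)%:R * m%:R^-1.
Proof.
move=> k2 ht; rewrite probE.
apply: (@le_trans _ _ (EW (wdg p phi) (Ssum k phi))).
  apply: EW_le => A /=; case h: (g * g * k.-1 < nu (mutual A))%N.
    exact: (@S_ge1 m k phi A x0 h).
  exact: Ssum_ge0.
apply: (le_trans (@ES_bound m k phi k2 ht)).
have m0 : (0 < m)%N by case: (m) x0 => [[]|].
have mR : (0 : R) < m%:R by rewrite ltr0n.
rewrite natrM; rewrite -mulrA; apply: ler_wpM2l => //.
rewrite natrM !natrX.
set y := (m%:R : R) ^+ k.
have y0 : y != 0 by rewrite expf_neq0 // gt_eqF.
have -> : (m%:R^-1 : R) ^+ (3 * k) = y^-1 ^+ 3.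
  by rewrite mulnC exprM; congr (_ ^+ 3); rewrite exprVn.
rewrite (_ : y * y * y^-1 ^+ 3 = y^-1); last by field.
rewrite lef_pV2 ?posrE ?exprn_gt0 //.
rewrite /y; clear y y0; case: k k2 {ht} => [//|k] _.
by rewrite exprS ler_peMr // exprn_ege1 // ler1n.
Qed.

Definition qr (t : 'I_g * 'I_g) := rdef (p t.1 t.2 * p t.2 t.1).
Definition Lval := \sum_t (- ln (qr t))^-1.
Definition Dval : R := 3 * (g * g)%:R * Lval + 2 * (g * g)%:R / ln 2 + 1.

Lemma lnq t : 0 < - ln (qr t).
Proof. by rewrite oppr_gt0 ln_lt0 // rdef_gt0 rdef_lt1. Qed.

Lemma L_ge0 : 0 <= Lval.
Proof. by apply: sumr_ge0 => t _; rewrite invr_ge0 ltW // lnq. Qed.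

Lemma L_t t : 1 <= Lval * (- ln (qr t)).
Proof.
have h : (- ln (qr t))^-1 <= Lval.
  by apply: (@le_sum_term R _ (fun t => (- ln (qr t))^-1) t) => i; rewrite invr_ge0 ltW // lnq.
have h2 := lnq t.
rewrite -(mulVf (x := - ln (qr t))); last by rewrite gt_eqF.
by rewrite ler_wpM2r // ltW.
Qed.

Lemma ht_ok m : (2 <= m)%N -> forall t : 'I_g * 'I_g,
  rdef (p t.1 t.2 * p t.2 t.1) ^+ (Num.truncn (3 * Lval * ln (m%:R : R))).+1
    <= (m%:R^-1) ^+ 3.
Proof.
move=> hm t; rewrite -/(qr t).
set x := 3 * Lval * ln (m%:R : R); set n := (Num.truncn x).+1.
have mR : (1 : R) <= m%:R by rewrite ler1n; apply: ltnW.
have m0 : (0 : R) < m%:R by apply: lt_le_trans mR.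
have lm : 0 <= ln (m%:R : R) by apply: ln_ge0.
have xn : x < n%:R by apply: truncnS_gt.
have r0 := rdef_gt0 (p t.1 t.2 * p t.2 t.1).
rewrite -ler_ln ?posrE ?exprn_gt0 ?invr_gt0 //.
rewrite !lnXn ?invr_gt0 // lnV ?posrE //.
rewrite -[_ *+ n]mulr_natl -[_ *+ 3]mulr_natl.
have hs := lnq t; have hL := L_t t.
set s := - ln (qr t) in hs hL.
have -> : ln (qr t) = - s by rewrite /s opprK.
have h1 : 0 <= (n%:R - x) * s by rewrite mulr_ge0 // ?subr_ge0 ltW.
have h2 : 0 <= ln (m%:R : R) * (Lval * s - 1) by rewrite mulr_ge0 // subr_ge0.
rewrite /x in h1.
set l := ln (m%:R : R) in h1 h2 *.
set N := (n%:R : R) in h1 *.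
lra.
Qed.

Lemma Nbound m : (2 <= m)%N ->
  (g * g * (Num.truncn (3 * Lval * ln (m%:R : R))).+1)%:R + (g * g)%:R
     <= Dval * ln (m%:R : R).
Proof.
move=> hm.
set x := 3 * Lval * ln (m%:R : R).
have hL := L_ge0.
have l2 : (0 : R) < ln 2 by apply: ln_gt0; rewrite ltr1n.
have mR : (2 : R) <= m%:R by rewrite ler_nat.
have lm : ln (2 : R) <= ln (m%:R : R).
  by rewrite ler_ln ?posrE // (lt_le_trans _ mR).
have x0 : 0 <= x by rewrite mulr_ge0 ?mulr_ge0 // (le_trans (ltW l2) lm).
have tx : (Num.truncn x)%:R <= x by rewrite truncn_le.
have hu : 1 <= ln (m%:R : R) / ln 2 by rewrite ler_pdivlMr // mul1r.
have G0 : (0 : R) <= (g * g)%:R by [].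
rewrite natrM -addn1 natrD.
have -> : Dval * ln (m%:R : R) = 3 * (g * g)%:R * Lval * ln (m%:R : R) +
     2 * (g * g)%:R * (ln (m%:R : R) / ln 2) + ln (m%:R : R).
  by rewrite /Dval; field; rewrite gt_eqF.
have hx : x = 3 * Lval * ln (m%:R : R) by [].
set G := (g * g)%:R in G0 *.
set u := ln (m%:R : R) / ln 2 in hu *.
set l := ln (m%:R : R) in hx lm *.
set T := (Num.truncn x)%:R in tx *.
have h1 : 0 <= G * (x - T) by rewrite mulr_ge0 // subr_ge0.
have h2 : 0 <= G * (u - 1) by rewrite mulr_ge0 // subr_ge0.
have l0 : 0 <= l by apply: le_trans (ltW l2) lm.
rewrite hx in h1.
lra.
Qed.

Lemma main_sec :
  exists D : R, 0 < D /\
    (forall (m : nat) (phi : 'I_m -> 'I_g), (2 <= m)%N ->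
       dg_expect p phi (fun A => (nu (mutual A))%:R) <= D * ln (m%:R)) /\
    (forall eps : R, 0 < eps -> exists M : nat, forall (m : nat) (phi : 'I_m -> 'I_g),
       (M <= m)%N ->
       1 - eps <= dg_prob p phi (fun A => (nu (mutual A))%:R <= D * ln (m%:R))).
Proof.
have l2 : (0 : R) < ln 2 by apply: ln_gt0; rewrite ltr1n.
exists Dval; split.
  rewrite /Dval.
  have h1 : (0 : R) <= 3 * (g * g)%:R * Lval by rewrite !mulr_ge0 // L_ge0.
  have h2 : (0 : R) <= 2 * (g * g)%:R / ln 2 by rewrite !mulr_ge0 // invr_ge0 ltW.
  lra.
split.
  move=> m phi hm.
  pose x0 := @Ordinal m 0 (ltnW hm).
  pose k := (Num.truncn (3 * Lval * ln (m%:R : R))).+2.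
  have hb := @prob_bound m k phi x0 isT (@ht_ok m hm).
  have hN := @Nbound m hm.
  rewrite dg_expectE.
  apply: (@le_trans _ _ (EW (wdg p phi) (fun A => (g * g * k.-1)%:R +
      m%:R * ((g * g * k.-1 < nu (mutual A))%N)%:R))).
    apply: EW_le => A; case h: (_ < _)%N.
      rewrite mulr1; apply: (@le_trans _ _ (m%:R)).
        by rewrite ler_nat; have := nu_le_card _ (mutual A); rewrite card_ord.
      by rewrite lerDr.
    by rewrite mulr0 addr0 ler_nat leqNgt h.
  rewrite EW_affine -probE.
  apply: le_trans hN; apply: lerD => //.
  have m0 : (m%:R : R) != 0 by rewrite pnatr_eq0 -lt0n ltnW.
  apply: (@le_trans _ _ (m%:R * ((g * g)%:R * m%:R^-1))).
    by rewrite ler_wpM2l.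
  by rewrite mulrCA mulfV ?mulr1.
move=> eps he.
exists (Num.truncn ((g * g)%:R / eps)).+2 => m phi hM.
have hm : (2 <= m)%N by apply: leq_trans hM.
pose x0 := @Ordinal m 0 (ltnW hm).
pose k := (Num.truncn (3 * Lval * ln (m%:R : R))).+2.
have hb := @prob_bound m k phi x0 isT (@ht_ok m hm).
have hN := @Nbound m hm.
have m0 : (0 : R) < m%:R by rewrite ltr0n ltnW.
have hmeps : (g * g)%:R * m%:R^-1 <= eps.
  rewrite ler_pdivrMr // mulrC.
  have h1 := truncnS_gt ((g * g)%:R / eps).
  have h2 : ((Num.truncn ((g * g)%:R / eps)).+1%:R : R) <= m%:R.
    by rewrite ler_nat; apply: leq_trans hM.
  have := lt_le_trans h1 h2; rewrite ltr_pdivrMr // mulrC => h3.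
  exact: ltW.
rewrite probE.
apply: (@le_trans _ _ (EW (wdg p phi) (fun A => 1 + (-1) *
      ((g * g * k.-1 < nu (mutual A))%N)%:R))).
  rewrite EW_affine -probE.
  have := le_trans hb hmeps; lra.
apply: EW_le => A /=; case h: (_ < _)%N.
  by rewrite mulr1 addrN.
rewrite mulr0 addr0.
have -> : (nu (mutual A))%:R <= Dval * ln (m%:R : R) => //.
apply: le_trans hN; apply: (@le_trans _ _ ((g * g * k.-1)%:R)).
  by rewrite ler_nat leqNgt h.
by rewrite lerDl.
Qed.

End Main.

Theorem mainTheorem6 (R : realType) (g : nat) (p : 'I_g -> 'I_g -> R) :
  (forall j k, 0 <= p j k <= 1) ->
  exists D : R, 0 < D /\
    (forall (m : nat) (phi : 'I_m -> 'I_g), (2 <= m)%N ->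
       dg_expect p phi (fun A => (nu (mutual A))%:R) <= D * ln (m%:R)) /\
    (forall eps : R, 0 < eps -> exists M : nat, forall (m : nat) (phi : 'I_m -> 'I_g),
       (M <= m)%N ->
       1 - eps <= dg_prob p phi (fun A => (nu (mutual A))%:R <= D * ln (m%:R))).
Proof. move=> hp; exact: (@main_sec R g p hp). Qed.
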